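(* Let $(X,d)$ be a non-empty complete metric space and let $T:X\to X$ be a strong contraction mapping. Let $x_0\in X$ be arbitrary and define the sequence $(x_i)_{i\ge0}$ by $x_i=T(x_{i-1})$ for $i\ge1$. Then $(x_i)$ is a Cauchy sequence in $(X,d)$, and hence converges to a limit $x^*\in X$.
   Context: For a subset $A$ of a metric space $(X,d)$, its diameter is $D(A):=\sup\{d(x,y): x,y\in A\}$. Given a self-map $T:X\to X$, set $X_0:=X$ and $X_{i+1}:=T(X_i)$ for $i\ge 0$. The map $T$ is called a strong contraction mapping if $X_{i+1}\subseteq X_i$ for all $i\ge0$ and there exists $q\in[0,1)$ such that $D(X_{i+1})\le q\,D(X_i)$ for all $i\ge 0$. *)

(* Defs.v *)
From Stdlib Require Import Reals.
Open Scope R_scope.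

Section MetricDefs.
Variables (X : Type) (d : X -> X -> R).

Definition is_metric : Prop :=
  (forall x y, 0 <= d x y) /\
  (forall x y, d x y = 0 <-> x = y) /\
  (forall x y, d x y = d y x) /\
  (forall x y z, d x z <= d x y + d y z).

Definition cauchy_seq (u : nat -> X) : Prop :=
  forall eps, 0 < eps ->
    exists N : nat, forall m n, (N <= m)%nat -> (N <= n)%nat -> d (u m) (u n) < eps.

Definition converges_to (u : nat -> X) (l : X) : Prop :=
  forall eps, 0 < eps -> exists N : nat, forall n, (N <= n)%nat -> d (u n) l < eps.

Definition complete_metric : Prop :=
  forall u : nat -> X, cauchy_seq u -> exists l, converges_to u l.

Definition is_diameter (A : X -> Prop) (r : R) : Prop :=
  is_lub (fun s => exists x y, A x /\ A y /\ s = d x y) r.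

Fixpoint iter_image (T : X -> X) (i : nat) : X -> Prop :=
  match i with
  | O => fun _ => True
  | S j => fun y => exists x, iter_image T j x /\ y = T x
  end.

Definition strong_contraction (T : X -> X) : Prop :=
  (forall i x, iter_image T (S i) x -> iter_image T i x) /\
  exists q, 0 <= q < 1 /\
    forall i, exists Di Di1,
      is_diameter (iter_image T i) Di /\
      is_diameter (iter_image T (S i)) Di1 /\
      Di1 <= q * Di.

End MetricDefs.

Arguments is_metric {X} d.
Arguments cauchy_seq {X} d u.
Arguments converges_to {X} d u l.
Arguments complete_metric {X} d.
Arguments is_diameter {X} d A r.
Arguments iter_image {X} T i _.
Arguments strong_contraction {X} d T.

(* Main.v *)
Require Import Defs.
From Stdlib Require Import Reals Lra Lia.
Open Scope R_scope.

Theorem lemma1 (X : Type) (d : X -> X -> R)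
  (Hmetric : is_metric d) (Hne : inhabited X) (Hcomplete : complete_metric d)
  (T : X -> X) (HT : strong_contraction d T)
  (x : nat -> X) (Hx : forall i, x (S i) = T (x i)) :
  cauchy_seq d x /\ exists xstar : X, converges_to d x xstar.
Proof.
  assert (Hc : cauchy_seq d x).
  2:{ split; [exact Hc| exact (Hcomplete x Hc)]. }
  destruct Hmetric as [Hpos [Hzero _]].
  destruct HT as [Hsub [q [[Hq0 Hq1] HD]]].
  assert (Hnest : forall k i y, iter_image T (k + i) y -> iter_image T i y).
  { induction k; intros i y H; [exact H|]. apply IHk, Hsub; exact H. }
  assert (Hmem : forall i, iter_image T i (x i)).
  { induction i; simpl; [exact I|]. exists (x i); split; auto. }
  destruct (HD 0%nat) as [D0 [_ [HD0 _]]].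
  assert (HD0pos : 0 <= D0).
  { destruct Hne as [a]. destruct HD0 as [Hub _]. rewrite <- (proj2 (Hzero a a) eq_refl).
    apply Hub. exists a, a; simpl; auto. }
  assert (Hbound : forall i r, is_diameter d (iter_image T i) r -> r <= q ^ i * D0).
  { induction i; intros r Hr.
    - rewrite (is_lub_u _ _ _ Hr HD0). simpl; lra.
    - destruct (HD i) as [Di [Di1 [H1 [H2 H3]]]].
      rewrite (is_lub_u _ _ _ Hr H2).
      specialize (IHi _ H1). simpl.
      apply Rle_trans with (q * Di); auto.
      rewrite Rmult_assoc. apply Rmult_le_compat_l; auto. }
  intros eps Heps.
  assert (Hy : 0 < eps / (D0 + 1)) by (apply Rdiv_lt_0_compat; lra).
  assert (Hqa : Rabs q < 1) by (rewrite Rabs_right; lra).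
  destruct (pow_lt_1_zero q Hqa _ Hy) as [N HN].
  exists N. intros m n Hm Hn.
  destruct (HD N) as [DN [_ [HDN _]]].
  assert (Hd : d (x m) (x n) <= DN).
  { destruct HDN as [Hub _]. apply Hub. exists (x m), (x n). split; [|split; auto].
    - replace m with ((m - N) + N)%nat in Hmem by lia.
      apply (Hnest (m - N)%nat). replace ((m - N) + N)%nat with m by lia. apply Hmem.
    - apply (Hnest (n - N)%nat). replace ((n - N) + N)%nat with n by lia. apply Hmem. }
  specialize (Hbound N DN HDN).
  specialize (HN N (le_n N)).
  rewrite Rabs_right in HN by (apply Rle_ge, pow_le; lra).
  assert (HqN : 0 <= q ^ N) by (apply pow_le; lra).
  assert (q ^ N * D0 < eps).
  { apply Rle_lt_trans with (q ^ N * (D0 + 1)). nra.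
    apply Rmult_lt_reg_r with (/ (D0 + 1)). apply Rinv_0_lt_compat; lra.
    rewrite Rmult_assoc, Rinv_r by lra. rewrite Rmult_1_r. exact HN. }
  lra.
Qed.
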